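(* For $n\ge 2$, let $\mathcal M^{\mathrm d}(n)$ be the number of MAB pairs $(u,v)$ of binary words with $|u|=|v|=n$ and $\mathrm{lsb}(u,v)+\mathrm{lsb}(v,u)\le n$. Then $$\mathcal M^{\mathrm d}(n)=\sum_{i=1}^{n-1}\sum_{j=1}^{n-i} D(2n-2i,\,j)\,D(2i,\,i).$$
   Context: Let $\Sigma=\{a,b\}$. For a word $w$ and a letter $c$, $|w|_c$ denotes the number of occurrences of $c$ in $w$. Two words $x,y$ are abelian equivalent, written $x\sim_{\mathrm{abl}}y$, if $|x|_c=|y|_c$ for all $c\in\Sigma$. For words $u,v$: a pair $(x,y)$ is an internal abelian-border of $(u,v)$ if $x$ is a nonempty proper suffix of $u$, $y$ is a proper prefix of $v$, and $x\sim_{\mathrm{abl}}y$; it is an external abelian-border of $(u,v)$ if $x$ is a nonempty proper prefix of $u$, $y$ is a proper suffix of $v$, and $x\sim_{\mathrm{abl}}y$. The pair $(u,v)$ is mutually abelian-bordered (MAB) if it has both an internal and an external abelian-border, and mutually abelian-unbordered (MAU) if it has neither. If $(u,v)$ has an internal abelian-border, $\mathrm{sb}(u,v)$ denotes its internal abelian-border $(x,y)$ of minimal length and $\mathrm{lsb}(u,v)=|x|$ is that minimal length. A binary word $w$ of length $m$ has an abelian-border of length $k$ ($1\le k\le m-1$) if its prefix of length $k$ is abelian equivalent to its suffix of length $k$. $D(m,k)$ denotes the number of binary words of length $m$ whose shortest abelian-border has length exactly $k$. *)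

(* Defs.v *)
From mathcomp Require Import all_boot.
Set Implicit Arguments. Unset Strict Implicit. Unset Printing Implicit Defensive.

(* Binary words over Sigma = {a,b} are represented as seq bool (a = false, b = true). *)

Definition abl (x y : seq bool) : bool :=
  [forall c : bool, count_mem c x == count_mem c y].

(* (x,y) with x the suffix of u of length k, y the prefix of v of length k.
   Abelian equivalence forces |x| = |y|, so borders are indexed by k = |x|.
   x nonempty proper suffix of u: 1 <= k < |u|; y proper prefix of v: k < |v|. *)
Definition int_border (u v : seq bool) (k : nat) : bool :=
  [&& 0 < k, k < size u, k < size v & abl (drop (size u - k) u) (take k v)].

Definition ext_border (u v : seq bool) (k : nat) : bool :=
  [&& 0 < k, k < size u, k < size v & abl (take k u) (drop (size v - k) v)].

Definition has_int_border (u v : seq bool) : bool :=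
  [exists k : 'I_(size u), int_border u v k].
Definition has_ext_border (u v : seq bool) : bool :=
  [exists k : 'I_(size u), ext_border u v k].

Definition MAB (u v : seq bool) : bool := has_int_border u v && has_ext_border u v.

(* length of the shortest internal abelian-border (meaningful when one exists) *)
Definition lsb (u v : seq bool) : nat :=
  \big[minn/size u]_(0 <= k < size u | int_border u v k) k.

Definition abl_border (w : seq bool) (k : nat) : bool :=
  [&& 1 <= k, k <= (size w).-1 & abl (take k w) (drop (size w - k) w)].

Definition shortest_abl_border (w : seq bool) (k : nat) : bool :=
  abl_border w k && [forall j : 'I_k, ~~ abl_border w j].

Definition D (m k : nat) : nat :=
  #|[set w : m.-tuple bool | shortest_abl_border w k]|.

Definition Md (n : nat) : nat :=
  #|[set p : n.-tuple bool * n.-tuple bool |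
       MAB p.1 p.2 && (lsb p.1 p.2 + lsb p.2 p.1 <= n)]|.

(* Main.v *)
Require Import Defs.
From mathcomp Require Import all_boot zify.
Set Implicit Arguments. Unset Strict Implicit. Unset Printing Implicit Defensive.

Lemma ablE x y : abl x y = (count_mem false x == count_mem false y) && (count_mem true x == count_mem true y).
Proof.
apply/forallP/andP => [H|[H1 H2]]; first by split; [exact: H false | exact: H true].
by case.
Qed.

Lemma abl_sym x y : abl x y = abl y x.
Proof. by rewrite !ablE ![count_mem _ y == _]eq_sym. Qed.

Lemma abl_compl a b c d : abl (a++b) (c++d) -> abl a d = abl b c.
Proof.
rewrite !ablE !count_cat => /andP[/eqP h1 /eqP h2].
by apply/idP/idP => /andP[/eqP e1 /eqP e2]; apply/andP; split; apply/eqP; lia.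
Qed.

Lemma drop_catr k (s1 s2 : seq bool) : size s1 <= k -> drop k (s1++s2) = drop (k - size s1) s2.
Proof. by rewrite drop_cat ltnNge => ->. Qed.

Lemma ext_int u v k : size u = size v -> ext_border u v k = int_border v u k.
Proof. by move=> e; rewrite /ext_border /int_border e abl_sym; case: (k < size v). Qed.

Lemma has_intP u v : reflect (exists k, int_border u v k) (has_int_border u v).
Proof.
apply: (iffP existsP) => [[k Hk]|[k Hk]]; first by exists k.
have kl : k < size u by case/and4P: Hk.
by exists (Ordinal kl).
Qed.

Lemma bigmin_le (P : pred nat) d (s : seq nat) x : x \in s -> P x -> \big[minn/d]_(k <- s | P k) k <= x.
Proof.
elim: s => //= y s IH; rewrite in_cons big_cons => /orP[/eqP->|xs] Px.
  by rewrite Px geq_minl.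
case: (P y); last exact: IH.
by rewrite (leq_trans (geq_minr _ _)) // IH.
Qed.

Lemma lsb_min u v i : int_border u v i -> (forall k, k < i -> ~~ int_border u v k) -> lsb u v = i.
Proof.
move=> Hi Hk; have il : i < size u by case/and4P: Hi.
apply/eqP; rewrite eqn_leq; apply/andP; split.
  by apply: bigmin_le => //; rewrite mem_index_iota.
apply: (big_ind (fun x => i <= x)) => //; first exact: ltnW.
  by move=> x y; rewrite leq_min => -> ->.
by move=> k Pk; rewrite leqNgt; apply/negP => /Hk; rewrite Pk.
Qed.

Lemma lsb_spec u v : has_int_border u v -> int_border u v (lsb u v) /\ forall k, k < lsb u v -> ~~ int_border u v k.
Proof.
move=> /has_intP ex; case: (ex_minnP ex) => m Pm Hm.
have mn : forall k, k < m -> ~~ int_border u v k.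
  by move=> k km; apply/negP => /Hm; rewrite leqNgt km.
by rewrite (lsb_min Pm mn).
Qed.
Lemma ib_cat (T1 x1 x2 T2 : seq bool) a i k : size T1 = a -> size x1 = i -> size x2 = i ->
  size T2 = a -> 0 < a -> 0 < k -> k <= i ->
  int_border (T1++x1) (x2++T2) k = abl (drop (i-k) x1) (take k x2).
Proof.
move=> sT sx sy sT2 a0 k0 ki.
rewrite /int_border !size_cat sT sx sy k0 /=.
have h : size T1 <= a + i - k by rewrite sT; lia.
rewrite (drop_catr _ h) sT.
rewrite takel_cat ?sy //.
have -> : a + i - k - a = i - k by lia.
have -> : k < i + size T2 by rewrite sT2; lia.
have -> : k < a + i by lia.
by [].
Qed.

Lemma ab_cat (s1 s2 : seq bool) a k : size s1 = a -> size s2 = a -> 0 < k -> k <= a ->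
  abl_border (s1++s2) k = abl (take k s1) (drop (a-k) s2).
Proof.
move=> s1a s2a k0 ka.
have h : size s1 <= a + a - k by rewrite s1a; lia.
rewrite /abl_border size_cat s1a s2a k0 takel_cat ?s1a // (drop_catr _ h) s1a.
have -> : a + a - k - a = a - k by lia.
have -> : k <= (a + a).-1 by lia.
by [].
Qed.

Lemma ib0 u v : int_border u v 0 = false. Proof. by []. Qed.
Lemma ab0 w : abl_border w 0 = false. Proof. by []. Qed.

Lemma has_ext_int u v : size u = size v -> has_ext_border u v = has_int_border v u.
Proof.
move=> e; apply/existsP/has_intP => [[k Hk]|[k Hk]].
  by exists k; rewrite -ext_int.
have kl : k < size u by rewrite e; case/and4P: Hk.
by exists (Ordinal kl); rewrite /= ext_int.
Qed.

Section Core.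
Variables (T1 T2 x1 x2 : seq bool) (a i : nat).
Hypotheses (sT1 : size T1 = a) (sT2 : size T2 = a) (sx1 : size x1 = i) (sx2 : size x2 = i)
  (a0 : 0 < a) (i0 : 0 < i).

Lemma ibi : int_border (T1++x1) (x2++T2) i = abl x1 x2.
Proof. by rewrite (ib_cat sT1 sx1 sx2 sT2) // subnn drop0 -sx2 take_size. Qed.

Lemma abi : abl_border (x1++x2) i = abl x1 x2.
Proof. by rewrite (ab_cat sx1 sx2) // subnn drop0 -sx1 take_size. Qed.

Lemma ab_ib j : 0 < j -> j < i -> abl x1 x2 ->
  abl_border (x1++x2) j = int_border (T1++x1) (x2++T2) (i-j).
Proof.
move=> j0 ji hx.
rewrite (ab_cat sx1 sx2) ?(ltnW ji) // (ib_cat sT1 sx1 sx2 sT2) //; try lia.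
have -> : i - (i - j) = j by lia.
apply: abl_compl; by rewrite !cat_take_drop.
Qed.

Lemma ab_ib2 k : 0 < k -> k <= a ->
  abl_border (T1++T2) k = int_border (x2++T2) (T1++x1) k.
Proof.
move=> k0 ka.
by rewrite (ab_cat sT1 sT2) // (ib_cat sx2 sT2 sT1 sx1) // abl_sym.
Qed.

Lemma core1 : (has_int_border (T1++x1) (x2++T2) && (lsb (T1++x1) (x2++T2) == i))
   = shortest_abl_border (x1++x2) i.
Proof.
apply/idP/idP.
  case/andP => /lsb_spec [H1 H2] /eqP E; rewrite E in H1 H2.
  have hx : abl x1 x2 by rewrite -ibi.
  apply/andP; split; first by rewrite abi.
  apply/forallP => -[j ji] /=.
  case: j ji => [|j] ji //.
  by rewrite ab_ib // H2 //; lia.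
case/andP => H1 /forallP H2.
have hx : abl x1 x2 by rewrite -abi.
have Hi : int_border (T1++x1) (x2++T2) i by rewrite ibi.
have Hm : forall k, k < i -> ~~ int_border (T1 ++ x1) (x2 ++ T2) k.
  move=> [|k] ki //.
  have e : k.+1 = i - (i - k.+1) by lia.
  have l : i - k.+1 < i by lia.
  by rewrite e -ab_ib //; [exact: (H2 (Ordinal l)) | lia].
rewrite (lsb_min Hi Hm) eqxx andbT.
by apply/has_intP; exists i.
Qed.

Lemma core2 : (has_int_border (x2++T2) (T1++x1) && (lsb (x2++T2) (T1++x1) <= a))
   = [exists j : 'I_a.+1, (0 < j) && shortest_abl_border (T1++T2) j].
Proof.
apply/idP/existsP.
  case/andP => /lsb_spec [H1 H2] la.
  have j0 : 0 < lsb (x2++T2) (T1++x1) by move: H1; case: (lsb _ _).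
  have jl : lsb (x2++T2) (T1++x1) < a.+1 by [].
  exists (Ordinal jl); rewrite /= j0 /=.
  apply/andP; split; first by rewrite ab_ib2.
  apply/forallP => -[k kj] /=.
  case: k kj => [|k] kj //.
  rewrite ab_ib2 //; last by lia.
  exact: H2.
move=> [[j jl]] /= /andP[j0 /andP[H1 /forallP H2]].
have Hi : int_border (x2++T2) (T1++x1) j by rewrite -ab_ib2.
have Hm : forall k, k < j -> ~~ int_border (x2 ++ T2) (T1 ++ x1) k.
  move=> [|k] kj //.
  by rewrite -ab_ib2 //; [exact: (H2 (Ordinal kj)) | lia].
rewrite (lsb_min Hi Hm) -ltnS jl andbT.
by apply/has_intP; exists j.
Qed.

Lemma core : (MAB (T1++x1) (x2++T2) && (lsb (T1++x1) (x2++T2) == i)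
             && (lsb (T1++x1) (x2++T2) + lsb (x2++T2) (T1++x1) <= a + i))
  = [exists j : 'I_a.+1, (0 < j) && shortest_abl_border (T1++T2) j]
    && shortest_abl_border (x1++x2) i.
Proof.
rewrite -core1 -core2 /MAB has_ext_int; last by rewrite !size_cat sT1 sT2 sx1 sx2 addnC.
case E: (lsb (T1 ++ x1) (x2 ++ T2) == i); last by rewrite !andbF.
move/eqP: E => ->; rewrite addnC leq_add2r.
by case: (has_int_border _ _); case: (has_int_border _ _); case: (_ <= a).
Qed.
End Core.

Lemma sum_eq1 y lo hi : lo <= y < hi -> \sum_(lo <= i < hi) (y == i) = 1.
Proof.
move=> hy.
have -> : forall s, \sum_(i <- s) (y == i) = count_mem y s.
  by elim=> [|z s IH]; rewrite ?big_nil // big_cons IH /= eq_sym.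
by rewrite count_uniq_mem ?iota_uniq // mem_index_iota hy.
Qed.

Lemma card_part (T : finType) (P : pred T) (Q : T -> nat -> bool) (f : T -> nat) lo hi :
  (forall x, P x -> lo <= f x < hi) -> (forall x i, lo <= i < hi -> Q x i = P x && (f x == i)) ->
  #|[set x | P x]| = \sum_(lo <= i < hi) #|[set x | Q x i]|.
Proof.
move=> hf hQ.
rewrite -sum1_card.
have -> : \sum_(x in [set x | P x]) 1 = \sum_(x | P x) \sum_(lo <= i < hi) (f x == i).
  apply: eq_big => [x|x]; first by rewrite inE.
  by rewrite inE => Px; rewrite sum_eq1 // hf.
rewrite exchange_big /= big_nat_cond [RHS]big_nat_cond.
apply: eq_bigr => i /andP[him _].
rewrite -sum1_card.
have -> : \sum_(x in [set x | Q x i]) 1 = \sum_(x | P x && (f x == i)) 1.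
  by apply: eq_bigl => x; rewrite inE hQ //.
by rewrite big_mkcondr; apply: eq_bigr => x _; case: (f x == i).
Qed.

Definition mk m (s : seq bool) : m.-tuple bool := insubd (nseq_tuple m false) s.
Arguments mk : simpl never.
Lemma mkK m s : size s = m -> val (mk m s) = s.
Proof. by move=> e; rewrite val_insubd e eqxx. Qed.

Lemma sab_uniq (w : seq bool) j j' : shortest_abl_border w j -> shortest_abl_border w j' -> j = j'.
Proof.
move=> /andP[h1 /forallP h2] /andP[h1' /forallP h2'].
case: (ltngtP j j') => // [l|l].
  by have := h2' (Ordinal l); rewrite h1.
by have := h2 (Ordinal l); rewrite h1'.
Qed.

Lemma cardT m a : #|[set t : m.-tuple bool | [exists j : 'I_a.+1, (0 < j) && shortest_abl_border t j]]|
  = \sum_(1 <= j < a.+1) D m j.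
Proof.
pose f (t : m.-tuple bool) := if [pick j : 'I_a.+1 | shortest_abl_border t j] is Some j then val j else 0.
have fE : forall (t : m.-tuple bool) j, j < a.+1 -> shortest_abl_border t j -> f t = j.
  move=> t j jl hj; rewrite /f; case: pickP => [k hk|].
    exact: sab_uniq hk hj.
  by move=> /(_ (Ordinal jl)); rewrite hj.
apply: (card_part (f := f)).
  by move=> t /existsP[[j jl] /= /andP[j0 hj]]; rewrite (fE _ _ jl hj) j0.
move=> t j /andP[j0 jl]; apply/idP/andP.
  move=> hj; split; last by rewrite (fE _ _ jl hj).
  by apply/existsP; exists (Ordinal jl); rewrite /= j0.
case=> /existsP[[k kl] /= /andP[k0 hk]] /eqP; rewrite (fE _ _ kl hk) => <-. done.
Qed.

Section Bij.
Variables (n i : nat).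
Hypotheses (i0 : 0 < i) (iln : i < n).

Definition Aset := [set p : n.-tuple bool * n.-tuple bool |
   MAB p.1 p.2 && (lsb p.1 p.2 == i) && (lsb p.1 p.2 + lsb p.2 p.1 <= n)].
Definition Bset := [set q : (2 * n - 2 * i).-tuple bool * (2 * i).-tuple bool |
   [exists j : 'I_(n - i).+1, (0 < j) && shortest_abl_border q.1 j] && shortest_abl_border q.2 i].

Definition g (p : n.-tuple bool * n.-tuple bool) : (2 * n - 2 * i).-tuple bool * (2 * i).-tuple bool :=
  (mk _ (take (n-i) p.1 ++ drop i p.2), mk _ (drop (n-i) p.1 ++ take i p.2)).
Definition f (q : (2 * n - 2 * i).-tuple bool * (2 * i).-tuple bool) : n.-tuple bool * n.-tuple bool :=
  (mk _ (take (n-i) q.1 ++ take i q.2), mk _ (drop i q.2 ++ drop (n-i) q.1)).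

Lemma g1 p : val (g p).1 = take (n-i) p.1 ++ drop i p.2.
Proof. by rewrite /g /f /= mkK // size_cat size_take size_drop !size_tuple; case: ifP; lia. Qed.
Lemma g2 p : val (g p).2 = drop (n-i) p.1 ++ take i p.2.
Proof. by rewrite /g /f /= mkK // size_cat size_take size_drop !size_tuple; case: ifP; lia. Qed.
Lemma f1 q : val (f q).1 = take (n-i) q.1 ++ take i q.2.
Proof. by rewrite /g /f /= mkK // size_cat !size_take !size_tuple; do 2 case: ifP; lia. Qed.
Lemma f2 q : val (f q).2 = drop i q.2 ++ drop (n-i) q.1.
Proof. by rewrite /g /f /= mkK // size_cat !size_drop !size_tuple; lia. Qed.

Lemma szs (u : n.-tuple bool) : (size (take (n-i) u) = n-i) * (size (drop (n-i) u) = i)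
  * (size (take i u) = i) * (size (drop i u) = n - i).
Proof.
rewrite !size_take !size_drop !size_tuple.
by do 2 case: ifP; (split; [split; [split|]|]); lia.
Qed.

Lemma szs2 (T : (2 * n - 2 * i).-tuple bool) (x : (2 * i).-tuple bool) :
  (size (take (n-i) T) = n-i) * (size (drop i x) = i).
Proof.
rewrite !size_take !size_drop !size_tuple.
by case: ifP; split; lia.
Qed.

Lemma gK : cancel g f.
Proof.
move=> [u v]; congr pair; apply: val_inj.
  by rewrite f1 g1 g2 /= (take_size_cat _ (szs u).1.1.1) (take_size_cat _ (szs u).1.1.2) cat_take_drop.
by rewrite f2 g1 g2 /= (drop_size_cat _ (szs u).1.1.2) (drop_size_cat _ (szs u).1.1.1) cat_take_drop.
Qed.

Lemma fK : cancel f g.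
Proof.
move=> [T x]; congr pair; apply: val_inj.
  by rewrite g1 f1 f2 /= (take_size_cat _ (szs2 T x).1) (drop_size_cat _ (szs2 T x).2) cat_take_drop.
by rewrite g2 f1 f2 /= (drop_size_cat _ (szs2 T x).1) (take_size_cat _ (szs2 T x).2) cat_take_drop.
Qed.

Lemma memAB p : (g p \in Bset) = (p \in Aset).
Proof.
rewrite !inE g1 g2.
case: p => u v /=.
have su := size_tuple u; have sv := size_tuple v.
have h1 : size (take (n-i) (val u)) = n - i by rewrite size_take su; case: ifP; lia.
have h2 : size (drop i (val v)) = n - i by rewrite size_drop sv.
have h3 : size (drop (n-i) (val u)) = i by rewrite size_drop su; lia.
have h4 : size (take i (val v)) = i by rewrite size_take sv; case: ifP; lia.
have := core h1 h2 h3 h4; rewrite !cat_take_drop subnK; last by lia.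
have a0 : 0 < n - i by lia.
by move=> /(_ a0 i0) ->.
Qed.

Lemma cardAB : #|Aset| = #|Bset|.
Proof.
rewrite -(card_imset _ (can_inj gK)); apply: eq_card => q.
apply/imsetP/idP => [[p pA ->]|qB]; first by rewrite memAB.
by exists (f q); rewrite ?fK // -memAB fK.
Qed.
End Bij.

Theorem mainTheorem2 (n : nat) : 2 <= n ->
  Md n = \sum_(1 <= i < n) \sum_(1 <= j < (n - i).+1) D (2 * n - 2 * i) j * D (2 * i) i.
Proof.
move=> n2.
rewrite /Md (card_part (f := fun p : n.-tuple bool * n.-tuple bool => lsb p.1 p.2)
  (Q := fun (p : n.-tuple bool * n.-tuple bool) i => MAB p.1 p.2 && (lsb p.1 p.2 == i) && (lsb p.1 p.2 + lsb p.2 p.1 <= n)) (lo := 1) (hi := n)).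
- rewrite big_nat_cond [RHS]big_nat_cond; apply: eq_bigr => i /andP[/andP[i0 iln] _].
  have := cardAB i0 iln; rewrite /Aset => ->.
  have -> : Bset n i = setX [set t : (2 * n - 2 * i).-tuple bool |
       [exists j : 'I_(n - i).+1, (0 < j) && shortest_abl_border t j]]
       [set x : (2 * i).-tuple bool | shortest_abl_border x i].
    by apply/setP => q; rewrite !inE.
  by rewrite cardsX cardT big_distrl.
- move=> [u v] /= /andP[/andP[hi _] _].
  have [H1 _] := lsb_spec hi.
  by case/and4P: H1 => -> /=; rewrite size_tuple.
- move=> p i _ /=.
  by case: (MAB _ _); case: (lsb _ _ == i); case: (_ <= n).
Qed.
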